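(* The set $\mathcal S\subseteq\mathcal G$ of multiplication tables $G$ such that $\overline G$ is simple is comeager in $\mathcal G$.
   Context: Let $\mathbb N=\{1,2,3,\dots\}$. Equip $\mathbb N^{\mathbb N\times\mathbb N}$ with the product topology of the discrete topology on $\mathbb N$. Let $\mathcal G$ be the subspace consisting of those $A\in\mathbb N^{\mathbb N\times\mathbb N}$ that are the multiplication table of a group on the underlying set $\mathbb N$ whose identity element is $1$. For $G\in\mathcal G$, $\overline G$ denotes the group on $\mathbb N$ with multiplication table $G$. *)

(* Defs.v *)
(* N = {1,2,3,...} is modelled by Stdlib's [positive],
   whose least element is [xH] = 1%positive. *)
From Stdlib Require Import PArith List.
Import ListNotations.

Definition table := positive -> positive -> positive.

Definition is_group_table (A : table) : Prop :=
  (forall x y z, A (A x y) z = A x (A y z)) /\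
  (forall x, A 1%positive x = x /\ A x 1%positive = x) /\
  (forall x, exists y, A x y = 1%positive /\ A y x = 1%positive).

Definition normal_subgroup (A : table) (H : positive -> Prop) : Prop :=
  H 1%positive /\
  (forall x y, H x -> H y -> H (A x y)) /\
  (forall x y, H x -> A x y = 1%positive -> H y) /\
  (forall x g ginv, H x -> A g ginv = 1%positive -> H (A (A g x) ginv)).

Definition simple_table (A : table) : Prop :=
  (exists x, x <> 1%positive) /\
  forall H, normal_subgroup A H ->
    (forall x, H x -> x = 1%positive) \/ (forall x, H x).

(* Product topology of the discrete topology: basic open sets are given by
   prescribing the values on a finite set F of coordinates. *)
Definition agree_on (F : list (positive * positive)) (A B : table) : Prop :=
  forall p, In p F -> A (fst p) (snd p) = B (fst p) (snd p).

Definition open_in_G (U : table -> Prop) : Prop :=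
  forall A, U A ->
    is_group_table A /\
    exists F, forall B, is_group_table B -> agree_on F A B -> U B.

Definition dense_in_G (D : table -> Prop) : Prop :=
  forall A F, is_group_table A -> exists B, is_group_table B /\ D B /\ agree_on F A B.

Definition comeager_in_G (S : table -> Prop) : Prop :=
  exists D : nat -> table -> Prop,
    (forall n, open_in_G (D n) /\ dense_in_G (D n)) /\
    forall A, is_group_table A -> (forall n, D n A) -> S A.

(* Main.v *)
Require Import Defs.
From Stdlib Require Import PArith ZArith List Lia Arith ClassicalEpsilon Classical FunctionalExtensionality FinFun Wf_nat.
From Stdlib Require Cantor.
Import ListNotations.

Lemma pigeon (h : nat -> nat) : (forall a b, h a = h b -> a = b) ->
  forall N, exists k, N <= h k.
Proof.
  intros Hi N. apply NNPP; intro Hn.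
  assert (Hl : forall k, h k < N) by (intro k; apply not_ge; intro; apply Hn; exists k; lia).
  assert (HN : NoDup (map h (seq 0 (S N)))).
  { apply Injective_map_NoDup. intros a b; apply Hi. apply seq_NoDup. }
  assert (Hinc : incl (map h (seq 0 (S N))) (seq 0 N)).
  { intros z Hz. apply in_map_iff in Hz. destruct Hz as [k [<- _]].
    apply in_seq. specialize (Hl k). lia. }
  pose proof (NoDup_incl_length HN Hinc) as HH.
  rewrite length_map, !length_seq in HH. lia.
Qed.

Section Enum.
Variable Q : nat -> Prop.
Hypothesis Qunb : forall N, exists n, N <= n /\ Q n.

Definition nextQ (m : nat) : nat :=
  epsilon (inhabits 0) (fun q => Q q /\ m <= q /\ forall q', Q q' -> m <= q' -> q <= q').

Lemma nextQ_spec m : Q (nextQ m) /\ m <= nextQ m /\ forall q', Q q' -> m <= q' -> nextQ m <= q'.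
Proof.
  unfold nextQ. apply epsilon_spec.
  destruct (dec_inh_nat_subset_has_unique_least_element (fun q => Q q /\ m <= q))
    as [q [[Hq Hl] _]].
  - intro n. apply classic.
  - destruct (Qunb m) as [n [H1 H2]]. exists n; auto.
  - exists q. destruct Hq as [Hq1 Hq2]. repeat split; auto.
Qed.

Fixpoint enumQ (n : nat) : nat :=
  match n with O => nextQ 0 | S k => nextQ (S (enumQ k)) end.

Lemma enumQ_in n : Q (enumQ n).
Proof. destruct n; simpl; apply nextQ_spec. Qed.

Lemma enumQ_lt n : enumQ n < enumQ (S n).
Proof. simpl. destruct (nextQ_spec (S (enumQ n))) as [_ [H _]]. lia. Qed.

Lemma enumQ_mono n m : n < m -> enumQ n < enumQ m.
Proof.
  induction 1. apply enumQ_lt. pose proof (enumQ_lt m). lia.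
Qed.

Lemma enumQ_inj n m : enumQ n = enumQ m -> n = m.
Proof.
  intro H. destruct (lt_eq_lt_dec n m) as [[Hl|Hl]|Hl]; auto;
  apply enumQ_mono in Hl; lia.
Qed.

Lemma enumQ_surj q : Q q -> exists n, enumQ n = q.
Proof.
  intro Hq.
  assert (Hk : forall k n, q - enumQ n = k -> enumQ n <= q -> exists m, enumQ m = q).
  { induction k as [k IH] using lt_wf_ind. intros n Hk Hle.
    destruct (Nat.eq_dec (enumQ n) q) as [E|E]. exists n; auto.
    assert (enumQ (S n) <= q).
    { simpl. apply nextQ_spec; auto. lia. }
    apply (IH (q - enumQ (S n))) with (n := S n); auto.
    pose proof (enumQ_lt n). lia. }
  apply (Hk (q - enumQ 0) 0); auto. simpl. apply nextQ_spec; auto; lia.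
Qed.
End Enum.

Lemma enum_set (I : Type) (code : I -> nat) (S : I -> Prop)
  (code_inj : forall i j, S i -> S j -> code i = code j -> i = j)
  (f : nat -> I) (f_in : forall n, S (f n)) (f_inj : forall n m, f n = f m -> n = m) :
  exists e : nat -> I, (forall n, S (e n)) /\ (forall n m, e n = e m -> n = m) /\
    (forall i, S i -> exists n, e n = i).
Proof.
  set (Q := fun n => exists i, S i /\ code i = n).
  assert (Qunb : forall N, exists n, N <= n /\ Q n).
  { intro N. destruct (pigeon (fun k => code (f k))) with (N := N) as [k Hk].
    - intros a b H. apply f_inj. apply code_inj; auto.
    - exists (code (f k)). split; auto. exists (f k); auto. }
  set (dec := fun n => epsilon (inhabits (f 0)) (fun i => S i /\ code i = n)).
  assert (Hdec : forall n, Q n -> S (dec n) /\ code (dec n) = n).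
  { intros n Hn. unfold dec. apply epsilon_spec. exact Hn. }
  exists (fun n => dec (enumQ Q n)). split; [|split].
  - intro n. apply Hdec. apply (enumQ_in Q Qunb).
  - intros n m H. apply (enumQ_inj Q Qunb).
    rewrite <- (proj2 (Hdec _ (enumQ_in Q Qunb n))), <- (proj2 (Hdec _ (enumQ_in Q Qunb m))).
    rewrite H; auto.
  - intros i Hi. destruct (enumQ_surj Q Qunb (code i)) as [n Hn].
    exists i; auto. exists n. rewrite Hn.
    destruct (Hdec (code i)) as [H1 H2]. exists i; auto.
    apply code_inj; auto.
Qed.

Definition infset {I} (S : I -> Prop) := exists f : nat -> I, (forall n, S (f n)) /\ (forall n m, f n = f m -> n = m).

Lemma enum_set' (I : Type) (code : I -> nat) (S : I -> Prop)
  (code_inj : forall i j, code i = code j -> i = j) : infset S ->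
  exists e : nat -> I, (forall n, S (e n)) /\ (forall n m, e n = e m -> n = m) /\
    (forall i, S i -> exists n, e n = i).
Proof. intros [f [H1 H2]]. apply (enum_set I code S) with (f := f); auto. Qed.

Lemma bij_sets (I : Type) (code : I -> nat) (code_inj : forall i j, code i = code j -> i = j)
  (S T : I -> bool) :
  infset (fun i => S i = true) -> infset (fun i => S i = false) ->
  infset (fun i => T i = true) -> infset (fun i => T i = false) ->
  exists p pi : I -> I, (forall i, p (pi i) = i) /\ (forall i, pi (p i) = i) /\
     (forall i, T (p i) = S i).
Proof.
  intros H1 H2 H3 H4.
  destruct (enum_set' I code _ code_inj H1) as [e1 [e1a [e1b e1c]]].
  destruct (enum_set' I code _ code_inj H2) as [e2 [e2a [e2b e2c]]].
  destruct (enum_set' I code _ code_inj H3) as [e3 [e3a [e3b e3c]]].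
  destruct (enum_set' I code _ code_inj H4) as [e4 [e4a [e4b e4c]]].
  set (inv := fun (e : nat -> I) i => epsilon (inhabits 0) (fun n => e n = i)).
  assert (Hinv : forall e i, (exists n, e n = i) -> e (inv e i) = i).
  { intros e i H. unfold inv. apply epsilon_spec. exact H. }
  assert (Hinv2 : forall e n, (forall n m, e n = e m -> n = m) -> inv e (e n) = n).
  { intros e n He. apply He. apply Hinv. eauto. }
  exists (fun i => if S i then e3 (inv e1 i) else e4 (inv e2 i)).
  exists (fun i => if T i then e1 (inv e3 i) else e2 (inv e4 i)).
  split; [|split].
  - intro i. destruct (T i) eqn:E.
    + rewrite e1a, Hinv2 by auto. apply Hinv; auto.
    + rewrite e2a, Hinv2 by auto. apply Hinv; auto.
  - intro i. destruct (S i) eqn:E.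
    + rewrite e3a, Hinv2 by auto. apply Hinv; auto.
    + rewrite e4a, Hinv2 by auto. apply Hinv; auto.
  - intro i. destruct (S i) eqn:E.
    + apply e3a.
    + apply e4a.
Qed.

Open Scope positive_scope.

Definition swp (u a z : positive) : positive :=
  if Pos.eqb z u then a else if Pos.eqb z a then u else z.

Lemma swp_invol u a z : swp u a (swp u a z) = z.
Proof.
  unfold swp. destruct (Pos.eqb_spec z u); destruct (Pos.eqb_spec z a);
  repeat match goal with |- context [Pos.eqb ?a ?b] => destruct (Pos.eqb_spec a b) end;
  congruence.
Qed.

Lemma relabel (T : Type) (KK : T -> Prop) (code : T -> nat)
  (code_inj : forall a b, KK a -> KK b -> code a = code b -> a = b)
  (lamb : positive -> T) (lamb_K : forall a, KK (lamb a))
  (lamb_inj : forall a b, lamb a = lamb b -> a = b) (S' : list positive) :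
  exists (Lab : T -> positive) (Inv : positive -> T),
    (forall p, KK (Inv p)) /\ (forall p, Lab (Inv p) = p) /\
    (forall k, KK k -> Inv (Lab k) = k) /\ (forall a, In a S' -> Lab (lamb a) = a).
Proof.
  induction S' as [|a S'' IH].
  - destruct (enum_set T code KK code_inj (fun n => lamb (Pos.of_succ_nat n)))
      as [e [e1 [e2 e3]]].
    + intro; apply lamb_K.
    + intros n m H. apply lamb_inj in H. apply SuccNat2Pos.inj in H. auto.
    + set (invE := fun k => epsilon (inhabits O) (fun n => e n = k)).
      assert (HinvE : forall k, KK k -> e (invE k) = k).
      { intros k Hk. unfold invE. apply epsilon_spec. apply e3; auto. }
      exists (fun k => Pos.of_succ_nat (invE k)), (fun p => e (pred (Pos.to_nat p))).
      split; [|split; [|split]].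
      * intro; apply e1.
      * intro p. assert (E : invE (e (pred (Pos.to_nat p))) = pred (Pos.to_nat p)).
        { apply e2. apply HinvE. apply e1. }
        rewrite E. apply SuccNat2Pos.inv. lia.
      * intros k Hk. rewrite SuccNat2Pos.pred_id. apply HinvE; auto.
      * intros a [].
  - destruct IH as [Lab1 [Inv1 [H1 [H2 [H3 H4]]]]].
    set (u := Lab1 (lamb a)).
    exists (fun k => swp u a (Lab1 k)), (fun p => Inv1 (swp u a p)).
    split; [|split; [|split]].
    + intro; apply H1.
    + intro p. rewrite H2. apply swp_invol.
    + intros k Hk. rewrite swp_invol. apply H3; auto.
    + intros b [<-|Hb].
      * unfold swp. rewrite Pos.eqb_refl. auto.
      * rewrite H4 by auto. unfold swp.
        destruct (Pos.eqb_spec b u) as [E|E].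
        -- unfold u in E. rewrite <- (H4 b Hb) in E.
           apply (f_equal Inv1) in E. rewrite !H3 in E by apply lamb_K.
           apply lamb_inj in E. auto.
        -- destruct (Pos.eqb_spec b a) as [E'|E']; auto.
           subst. unfold u. rewrite H4; auto.
Qed.

(* normal-closure witnesses in a table *)
Fixpoint foldnc (B : table) (x xinv : positive) (l : list ((positive * positive) * bool)) : positive :=
  match l with
  | [] => 1
  | t :: l' => B (B (B (fst (fst t)) (if snd t then x else xinv)) (snd (fst t))) (foldnc B x xinv l')
  end.

Fixpoint Fnc (B : table) (x xinv : positive) (l : list ((positive * positive) * bool)) : list (positive * positive) :=
  match l with
  | [] => []
  | t :: l' => (fst (fst t), snd (fst t)) :: (fst (fst t), if snd t then x else xinv) ::
       (B (fst (fst t)) (if snd t then x else xinv), snd (fst t)) ::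
       (B (B (fst (fst t)) (if snd t then x else xinv)) (snd (fst t)), foldnc B x xinv l') :: Fnc B x xinv l'
  end.

Definition P_nc (B : table) (x y : positive) : Prop :=
  exists xinv l, B x xinv = 1 /\ Forall (fun t => B (fst (fst t)) (snd (fst t)) = 1) l /\
    y = foldnc B x xinv l.

Lemma Fnc_agree B B' x xinv l :
  agree_on (Fnc B x xinv l) B B' -> Forall (fun t => B (fst (fst t)) (snd (fst t)) = 1) l ->
  foldnc B' x xinv l = foldnc B x xinv l /\ Forall (fun t => B' (fst (fst t)) (snd (fst t)) = 1) l.
Proof.
  induction l as [|t l IH]; intros Hag Hf; simpl; auto.
  inversion Hf; subst.
  assert (Hg : forall a b, In (a,b) (Fnc B x xinv (t :: l)) -> B a b = B' a b)
    by (intros a b Hin; apply (Hag (a,b) Hin)).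
  assert (Hag' : agree_on (Fnc B x xinv l) B B').
  { intros p Hp. apply Hag. simpl. right; right; right; right; auto. }
  destruct (IH Hag' H2) as [E1 E2].
  destruct t as [[g gi] e]. simpl in *. split.
  - rewrite E1.
    rewrite <- (Hg g (if e then x else xinv)) by (simpl; auto).
    rewrite <- (Hg (B g (if e then x else xinv)) gi) by (simpl; auto).
    rewrite <- (Hg (B (B g (if e then x else xinv)) gi) (foldnc B x xinv l)) by (simpl; auto).
    reflexivity.
  - constructor; auto. simpl. rewrite <- (Hg g gi) by (simpl; auto). auto.
Qed.

Lemma P_nc_normal B x y H : normal_subgroup B H -> H x -> P_nc B x y -> H y.
Proof.
  intros [N1 [N2 [N3 N4]]] Hx [xinv [l [E [Hf ->]]]].
  assert (Hxi : H xinv) by (apply (N3 x); auto).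
  induction l as [|t l IH]; simpl; auto.
  inversion Hf; subst. apply N2; auto.
  apply (N4 _ _ _); auto. destruct (snd t); auto.
Qed.

Open Scope positive_scope.

Section Core.
Variable A : table.
Hypothesis HA : is_group_table A.

Definition invA (a : positive) : positive :=
  proj1_sig (constructive_indefinite_description _ (proj2 (proj2 HA) a)).

Lemma A_assoc a b c : A (A a b) c = A a (A b c).
Proof. apply (proj1 HA). Qed.
Lemma A_1l a : A 1 a = a.
Proof. apply (proj1 (proj2 HA)). Qed.
Lemma A_1r a : A a 1 = a.
Proof. apply (proj1 (proj2 HA)). Qed.
Lemma A_inv_r a : A a (invA a) = 1%positive.
Proof. unfold invA. destruct (constructive_indefinite_description _ _) as [b [H1 H2]]. exact H1. Qed.
Lemma A_inv_l a : A (invA a) a = 1%positive.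
Proof. unfold invA. destruct (constructive_indefinite_description _ _) as [b [H1 H2]]. exact H2. Qed.
Lemma A_cancel_l a b : A (invA a) (A a b) = b.
Proof. rewrite <- A_assoc, A_inv_l, A_1l. reflexivity. Qed.
Lemma A_cancel_l' a b : A a (A (invA a) b) = b.
Proof. rewrite <- A_assoc, A_inv_r, A_1l. reflexivity. Qed.

Variables x y : positive.
Hypothesis Hx : x <> 1%positive.

Definition X := ((positive * nat) * Z)%type.
Definition lam (b : positive) (p : X) : X := ((A b (fst (fst p)), snd (fst p)), snd p).
Lemma lam_inv b p : lam b (lam (invA b) p) = p.
Proof. destruct p as [[a j] n]. unfold lam; simpl. rewrite A_cancel_l'. reflexivity. Qed.
Lemma lam_inv' b p : lam (invA b) (lam b p) = p.
Proof. destruct p as [[a j] n]. unfold lam; simpl. rewrite A_cancel_l. reflexivity. Qed.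
Lemma lam_mul a b p : lam (A a b) p = lam a (lam b p).
Proof. destruct p as [[c j] n]. unfold lam; simpl. rewrite A_assoc. reflexivity. Qed.
Lemma lam_1 p : lam 1 p = p.
Proof. destruct p as [[c j] n]. unfold lam; simpl. rewrite A_1l. reflexivity. Qed.

Definition zit (n : Z) (a : positive) : positive :=
  match n with Z0 => a | Zpos p => Pos.iter (A y) a p | Zneg p => Pos.iter (A (invA y)) a p end.

Lemma zit_succ n a : zit (n + 1) a = A y (zit n a).
Proof.
  destruct n as [|p|p].
  - reflexivity.
  - simpl. rewrite Pos.add_1_r, Pos.iter_succ. reflexivity.
  - destruct (Pos.succ_pred_or p) as [->|E].
    + simpl. rewrite A_cancel_l'. reflexivity.
    + rewrite <- E. replace (Z.neg (Pos.succ (Pos.pred p)) + 1)%Z with (Z.neg (Pos.pred p)) by lia.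
      simpl. rewrite Pos.iter_succ, A_cancel_l'. reflexivity.
Qed.

Lemma zit_pred n a : zit (n - 1) a = A (invA y) (zit n a).
Proof.
  rewrite <- (A_cancel_l y (zit (n-1) a)). f_equal.
  rewrite <- zit_succ. f_equal. lia.
Qed.

Lemma zit_add n m a : zit n (zit m a) = zit (n + m) a.
Proof.
  induction n using Z.peano_ind.
  - reflexivity.
  - rewrite <- Z.add_1_r, zit_succ, IHn, <- zit_succ. f_equal. lia.
  - rewrite <- Z.sub_1_r, zit_pred, IHn, <- zit_pred. f_equal. lia.
Qed.

Definition ind1 (a : positive) : Z := if Pos.eqb a 1 then 1%Z else 0%Z.
Definition g (p : X) : X := (fst p, (snd p + ind1 (fst (fst p)))%Z).
Definition gi (p : X) : X := (fst p, (snd p - ind1 (fst (fst p)))%Z).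
Definition phi (p : X) : X := (fst p, if Pos.eqb (fst (fst p)) 1 then (- snd p)%Z else snd p).
Definition cc (p : X) : X := ((zit (snd p) (fst (fst p)), snd (fst p)), snd p).
Definition cci (p : X) : X := ((zit (- snd p) (fst (fst p)), snd (fst p)), snd p).
Definition sh (p : X) : X := (fst p, (snd p + 1)%Z).
Definition shi (p : X) : X := (fst p, (snd p - 1)%Z).

Definition Sb (i : positive * nat) : bool := (Pos.eqb (fst i) 1 || Pos.eqb (fst i) x)%bool.

Variables q1 q1i q2 q2i : positive * nat -> positive * nat.
Hypothesis Hq1a : forall i, q1 (q1i i) = i.
Hypothesis Hq1b : forall i, q1i (q1 i) = i.
Hypothesis Hq1c : forall i, Nat.even (snd (q1 i)) = Sb i.
Hypothesis Hq2a : forall i, q2 (q2i i) = i.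
Hypothesis Hq2b : forall i, q2i (q2 i) = i.
Hypothesis Hq2c : forall i, negb (Nat.even (snd (q2 i))) = Sb i.

Definition P1 (p : X) : X := (q1 (fst p), snd p).
Definition P1i (p : X) : X := (q1i (fst p), snd p).
Definition P2 (p : X) : X := (q2 (fst p), snd p).
Definition P2i (p : X) : X := (q2i (fst p), snd p).

Definition gen (n : nat) : (X -> X) * (X -> X) :=
  match n with
  | O => (g, gi)
  | S O => (phi, phi)
  | S (S O) => (P1, P1i)
  | S (S (S O)) => (P2, P2i)
  | S (S (S (S O))) => (cc, cci)
  | S (S (S (S (S k)))) => (lam (Pos.of_succ_nat k), lam (invA (Pos.of_succ_nat k)))
  end.

Lemma gen_ok n p : fst (gen n) (snd (gen n) p) = p /\ snd (gen n) (fst (gen n) p) = p.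
Proof.
  destruct p as [[a j] m].
  destruct n as [|[|[|[|[|k]]]]]; simpl.
  - unfold g, gi, ind1; simpl. split; f_equal; lia.
  - unfold phi; cbn [fst snd]. destruct (Pos.eqb a 1); cbn [fst snd]; split; f_equal; lia.
  - unfold P1, P1i; simpl. rewrite Hq1a, Hq1b; auto.
  - unfold P2, P2i; simpl. rewrite Hq2a, Hq2b; auto.
  - unfold cc, cci; simpl. rewrite !zit_add.
    replace (m + - m)%Z with 0%Z by lia. replace (- m + m)%Z with 0%Z by lia. auto.
  - split; [apply lam_inv | apply lam_inv'].
Qed.

Definition letter (l : nat * bool) : X -> X :=
  if snd l then fst (gen (fst l)) else snd (gen (fst l)).

Fixpoint eval (w : list (nat * bool)) : X -> X :=
  match w with [] => fun p => p | l :: w' => fun p => letter l (eval w' p) end.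

Definition invw (w : list (nat * bool)) : list (nat * bool) :=
  rev (map (fun l => (fst l, negb (snd l))) w).

Lemma eval_app w1 w2 p : eval (w1 ++ w2) p = eval w1 (eval w2 p).
Proof. induction w1; simpl; auto. rewrite IHw1; auto. Qed.

Lemma letter_inv l p : letter (fst l, negb (snd l)) (letter l p) = p.
Proof. destruct l as [n [|]]; unfold letter; simpl; apply gen_ok. Qed.

Lemma eval_invw w p : eval (invw w) (eval w p) = p.
Proof.
  induction w as [|l w IH]; simpl; auto. unfold invw in *. simpl.
  rewrite eval_app. simpl. rewrite letter_inv. apply IH.
Qed.

Lemma invw_invol w : invw (invw w) = w.
Proof.
  unfold invw. rewrite map_rev, rev_involutive, map_map.
  rewrite <- (map_id w) at 2. apply map_ext. intros [a b]; simpl. rewrite Bool.negb_involutive; auto.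
Qed.

Lemma eval_invw' w p : eval w (eval (invw w) p) = p.
Proof. rewrite <- (invw_invol w) at 1. apply eval_invw. Qed.

Definition K (f : X -> X) : Prop := exists w, eval w = f.

Lemma K_id : K (fun p => p).
Proof. exists []. reflexivity. Qed.
Lemma K_comp f h : K f -> K h -> K (fun p => f (h p)).
Proof.
  intros [w1 <-] [w2 <-]. exists (w1 ++ w2). apply functional_extensionality. intro. apply eval_app.
Qed.
Lemma K_gen1 n : K (fst (gen n)).
Proof. exists [(n, true)]. reflexivity. Qed.
Lemma K_gen2 n : K (snd (gen n)).
Proof. exists [(n, false)]. reflexivity. Qed.
Lemma K_lam a : K (lam a).
Proof.
  exists [(5 + (Pos.to_nat a - 1), true)]%nat.
  replace (5 + (Pos.to_nat a - 1))%nat with (S (S (S (S (S (Pos.to_nat a - 1))))))%nat by lia.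
  unfold eval, letter; simpl.
  rewrite (SuccNat2Pos.inv (Pos.to_nat a - 1) a) by lia. reflexivity.
Qed.
Lemma K_laminv a : K (lam (invA a)).
Proof. apply K_lam. Qed.

Inductive NC : (X -> X) -> Prop :=
| NC_id : NC (fun p => p)
| NC_cons : forall h hi (e : bool) z, K h -> K hi -> (forall p, h (hi p) = p) -> (forall p, hi (h p) = p) ->
    NC z -> NC (fun p => h ((if e then lam x else lam (invA x)) (hi (z p)))).

Lemma NC_K z : NC z -> K z.
Proof.
  induction 1. apply K_id. apply K_comp; auto. apply K_comp. destruct e; apply K_lam.
  apply K_comp; auto.
Qed.

Lemma NC_app z1 z2 : NC z1 -> NC z2 -> NC (fun p => z1 (z2 p)).
Proof.
  intros H1 H2. induction H1; simpl; auto.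
  apply (NC_cons h hi e (fun p => z (z2 p))); auto.
Qed.

Lemma NC_conj z h hi : NC z -> K h -> K hi -> (forall p, h (hi p) = p) -> (forall p, hi (h p) = p) ->
  NC (fun p => h (z (hi p))).
Proof.
  intros Hz Kh Khi E1 E2. induction Hz.
  - cbv beta. replace (fun p => h (hi p)) with (fun p : X => p) by (apply functional_extensionality; auto).
    constructor.
  - cbv beta. replace (fun p => h (h0 ((if e then lam x else lam (invA x)) (hi0 (z (hi p))))))
      with (fun p => (fun q => h (h0 q)) ((if e then lam x else lam (invA x))
              ((fun q => hi0 (hi q)) ((fun q => h (z (hi q))) p)))).
    + apply (NC_cons (fun q => h (h0 q)) (fun q => hi0 (hi q)) e (fun q => h (z (hi q)))); auto using K_comp.
      * intro p. rewrite ?H1, ?H2, ?E1, ?E2, ?H1, ?H2. auto.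
      * intro p. rewrite ?E2, ?H2, ?E1, ?H1. auto.
    + apply functional_extensionality. intro p. simpl. rewrite E2. auto.
Qed.

Lemma lamx_inv (e : bool) (p : X) : (if e then lam x else lam (invA x)) ((if negb e then lam x else lam (invA x)) p) = p.
Proof. destruct e; simpl. apply lam_inv. apply lam_inv'. Qed.

Lemma NC_single (h hi : X -> X) (e : bool) : K h -> K hi -> (forall p, h (hi p) = p) -> (forall p, hi (h p) = p) ->
  NC (fun p => h ((if e then lam x else lam (invA x)) (hi p))).
Proof. intros. apply (NC_cons h hi e (fun p => p)); auto. constructor. Qed.

Lemma NC_inv (z : X -> X) : NC z -> exists zi, NC zi /\ (forall p, z (zi p) = p) /\ (forall p, zi (z p) = p).
Proof.
  induction 1 as [|h hi e z Kh Khi E1 E2 Hz [zi [Hzi [F1 F2]]]].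
  - exists (fun p => p). repeat split; auto. constructor.
  - exists (fun p => zi (h ((if negb e then lam x else lam (invA x)) (hi p)))). split; [|split].
    + apply NC_app; auto. apply NC_single; auto.
    + intro p. rewrite F1, E2, lamx_inv, E1. auto.
    + intro p. rewrite E2. destruct e; simpl; [rewrite lam_inv'|rewrite lam_inv]; rewrite E1; auto.
Qed.

Lemma xinv_ne1 : invA x <> 1%positive.
Proof. intro E. apply Hx. rewrite <- (A_inv_r x). rewrite E, A_1r. reflexivity. Qed.

Lemma v_eq (p : X) : phi (lam x (g (lam (invA x) (gi (phi p))))) = if Sb (fst p) then sh p else p.
Proof.
  destruct p as [[a j] n]. unfold phi, lam, g, gi, sh, Sb, ind1; cbn [fst snd].
  rewrite A_cancel_l'.
  destruct (Pos.eqb_spec a 1) as [->|Ha].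
  - rewrite A_1r. rewrite (proj2 (Pos.eqb_neq _ _) xinv_ne1). cbn. f_equal; lia.
  - idtac.
    destruct (Pos.eqb_spec (A (invA x) a) 1) as [E|E]; destruct (Pos.eqb_spec a x) as [E'|E']; cbn.
    + f_equal; lia.
    + exfalso. apply E'. rewrite <- (A_cancel_l' x a), E, A_1r. reflexivity.
    + exfalso. apply E. subst. apply A_inv_l.
    + f_equal; lia.
Qed.

Definition V (p : X) : X := if Sb (fst p) then sh p else p.

Lemma s_eq (p : X) : P1 (V (P1i (P2 (V (P2i p))))) = sh p.
Proof.
  destruct p as [i n]. unfold P1, P1i, P2, P2i, V, sh; cbn [fst snd].
  pose proof (Hq1c (q1i i)) as E1. rewrite Hq1a in E1.
  pose proof (Hq2c (q2i i)) as E2. rewrite Hq2a in E2.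
  rewrite <- E2. destruct (Nat.even (snd i)) eqn:Ev; cbn [negb fst snd];
    rewrite Hq2a, <- E1; cbn [fst snd]; rewrite Hq1a; f_equal; lia.
Qed.

Lemma tau_eq (p : X) : cc (sh (cci (shi p))) = lam y p.
Proof.
  destruct p as [[a j] n]. unfold cc, sh, cci, shi, lam; simpl.
  rewrite zit_add. replace (n - 1 + 1 + - (n - 1))%Z with 1%Z by lia.
  replace (n - 1 + 1)%Z with n by lia. reflexivity.
Qed.

Lemma NC_lamy : NC (lam y).
Proof.
  assert (Ns : NC (lam x)).
  { exact (NC_single (fun q => q) (fun q => q) true K_id K_id (fun _ => eq_refl) (fun _ => eq_refl)). }
  assert (Nsi : NC (lam (invA x))).
  { exact (NC_single (fun q => q) (fun q => q) false K_id K_id (fun _ => eq_refl) (fun _ => eq_refl)). }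
  assert (Nw : NC (fun p => lam x (g (lam (invA x) (gi p))))).
  { apply (NC_app (lam x) (fun p => g (lam (invA x) (gi p)))); auto.
    apply (NC_conj (lam (invA x)) g gi); auto.
    apply (K_gen1 O). apply (K_gen2 O). apply (gen_ok O). apply (gen_ok O). }
  assert (Nv : NC V).
  { assert (E : V = (fun p => phi ((fun p => lam x (g (lam (invA x) (gi p)))) (phi p)))).
    { apply functional_extensionality. intro p. symmetry. apply v_eq. }
    rewrite E. apply (NC_conj (fun p => lam x (g (lam (invA x) (gi p)))) phi phi); auto.
    apply (K_gen1 (S O)). apply (K_gen1 (S O)). apply (gen_ok (S O)). apply (gen_ok (S O)). }
  assert (Nsh : NC sh).
  { assert (E : sh = (fun p => (fun q => P1 (V (P1i q))) ((fun q => P2 (V (P2i q))) p))).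
    { apply functional_extensionality. intro p. symmetry. apply s_eq. }
    rewrite E. apply (NC_app (fun q => P1 (V (P1i q))) (fun q => P2 (V (P2i q)))).
    apply (NC_conj V P1 P1i); auto.
    apply (K_gen1 (S (S O))). apply (K_gen2 (S (S O))). apply (gen_ok (S (S O))). apply (gen_ok (S (S O))).
    apply (NC_conj V P2 P2i); auto.
    apply (K_gen1 (S (S (S O)))). apply (K_gen2 (S (S (S O)))). apply (gen_ok (S (S (S O)))). apply (gen_ok (S (S (S O)))). }
  destruct (NC_inv sh Nsh) as [zi [Nzi [F1 F2]]].
  assert (Ezi : zi = shi).
  { apply functional_extensionality. intro p.
    rewrite <- (F2 (shi p)). f_equal. unfold sh, shi. destruct p; simpl; f_equal; lia. }
  subst zi.
  assert (E : lam y = (fun p => (fun q => cc (sh (cci q))) (shi p))).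
  { apply functional_extensionality. intro p. symmetry. apply tau_eq. }
  rewrite E. apply (NC_app (fun q => cc (sh (cci q))) shi); auto. apply (NC_conj sh cc cci); auto.
  apply (K_gen1 (S (S (S (S O))))). apply (K_gen2 (S (S (S (S O))))).
  apply (gen_ok (S (S (S (S O))))). apply (gen_ok (S (S (S (S O))))).
Qed.

Definition enc_l (l : nat * bool) : nat := Cantor.to_nat (fst l, if snd l then 1 else 0)%nat.
Fixpoint enc (w : list (nat * bool)) : nat :=
  match w with [] => O | l :: w' => S (Cantor.to_nat (enc_l l, enc w')) end.

Lemma enc_inj w w' : enc w = enc w' -> w = w'.
Proof.
  revert w'. induction w as [|l w IH]; intros [|l' w'] H; cbn [enc] in H; try discriminate; auto.
  apply Nat.succ_inj in H. apply (f_equal Cantor.of_nat) in H. rewrite !Cantor.cancel_of_to in H.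
  injection H as H1 H2. apply IH in H2. subst. f_equal.
  unfold enc_l in H1. apply (f_equal Cantor.of_nat) in H1. rewrite !Cantor.cancel_of_to in H1.
  destruct l as [a b], l' as [a' b']. cbn [fst snd] in H1. injection H1 as Ha Hb. subst.
  destruct b, b'; simpl in Hb; congruence.
Qed.

Definition code (f : X -> X) : nat := enc (epsilon (inhabits []) (fun w => eval w = f)).

Lemma code_inj a b : K a -> K b -> code a = code b -> a = b.
Proof.
  intros Ha Hb H. unfold code in H. apply enc_inj in H.
  pose proof (epsilon_spec (inhabits []) (fun w => eval w = a) Ha) as E1.
  pose proof (epsilon_spec (inhabits []) (fun w => eval w = b) Hb) as E2.
  simpl in *. rewrite H in E1. congruence.
Qed.

Lemma lam_inj a b : lam a = lam b -> a = b.
Proof.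
  intro H. apply (f_equal (fun f => fst (fst (f ((1, O), 0%Z))))) in H. unfold lam in H; simpl in H.
  rewrite !A_1r in H. auto.
Qed.

Variable S' : list positive.
Hypothesis H1S : In 1 S'.
Hypothesis HxS : In x S'.
Hypothesis HyS : In y S'.

Lemma core_B : exists B, is_group_table B /\ P_nc B x y /\
  (forall a b, In a S' -> In b S' -> In (A a b) S' -> B a b = A a b).
Proof.
  destruct (relabel (X -> X) K code code_inj lam K_lam lam_inj S') as [Lab [Inv [I1 [I2 [I3 I4]]]]].
  set (B := fun p q => Lab (fun z => Inv p (Inv q z))).
  assert (Hid : (fun p : X => p) = lam 1).
  { apply functional_extensionality. intro. symmetry. apply lam_1. }
  assert (Inv_lam : forall a, In a S' -> Inv a = lam a).
  { intros a Ha. rewrite <- (I4 a Ha) at 1. apply I3. apply K_lam. }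
  assert (Lab_id : Lab (fun p => p) = 1).
  { rewrite Hid. apply I4; auto. }
  assert (BL : forall u v, K u -> K v -> B (Lab u) (Lab v) = Lab (fun z => u (v z))).
  { intros u v Ku Kv. unfold B. rewrite !I3; auto. }
  exists B. split; [|split].
  - split; [|split].
    + intros p q r. unfold B.
      rewrite (I3 (fun z => Inv p (Inv q z))) by (apply K_comp; auto).
      rewrite (I3 (fun z => Inv q (Inv r z))) by (apply K_comp; auto). reflexivity.
    + intro p. unfold B. rewrite Inv_lam by auto. split.
      * replace (fun z => lam 1 (Inv p z)) with (Inv p). apply I2.
        apply functional_extensionality. intro. rewrite lam_1. auto.
      * replace (fun z => Inv p (lam 1 z)) with (Inv p). apply I2.
        apply functional_extensionality. intro. rewrite lam_1. auto.
    + intro p. destruct (I1 p) as [w Hw].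
      assert (Kw : K (eval (invw w))) by (exists (invw w); auto).
      exists (Lab (eval (invw w))). unfold B. rewrite I3 by auto. rewrite <- Hw. split.
      * replace (fun z => eval w (eval (invw w) z)) with (fun z : X => z). auto.
        apply functional_extensionality. intro. rewrite eval_invw'. auto.
      * replace (fun z => eval (invw w) (eval w z)) with (fun z : X => z). auto.
        apply functional_extensionality. intro. rewrite eval_invw. auto.
  - set (xinv := Lab (lam (invA x))).
    assert (Ex : x = Lab (lam x)) by (symmetry; apply I4; auto).
    assert (TR : forall z, NC z -> exists l, Forall (fun t => B (fst (fst t)) (snd (fst t)) = 1) l /\
                   foldnc B x xinv l = Lab z).
    { induction 1 as [|h hi e z Kh Khi E1 E2 Hz [l [Hl Hf]]].
      - exists []. split; auto.
      - exists (((Lab h, Lab hi), e) :: l). split.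
        + constructor; auto. simpl. rewrite BL by auto.
          replace (fun z => h (hi z)) with (fun z : X => z). auto.
          apply functional_extensionality. intro. rewrite E1. auto.
        + simpl. rewrite Hf.
          assert (Ke : K (if e then lam x else lam (invA x))) by (destruct e; apply K_lam).
          assert (Ee : (if e then x else xinv) = Lab (if e then lam x else lam (invA x))) by (destruct e; auto).
          rewrite Ee, BL, BL, BL; auto using K_comp, NC_K. }
    destruct (TR (lam y) NC_lamy) as [l [Hl Hf]].
    exists xinv, l. split; [|split]; auto.
    + rewrite Ex at 1. unfold xinv. rewrite BL by apply K_lam.
      replace (fun z => lam x (lam (invA x) z)) with (fun z : X => z). auto.
      apply functional_extensionality. intro. rewrite lam_inv. auto.
    + rewrite Hf. symmetry. apply I4; auto.
  - intros a b Ha Hb Hab. unfold B. rewrite !Inv_lam by auto.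
    replace (fun z => lam a (lam b z)) with (lam (A a b)). apply I4; auto.
    apply functional_extensionality. intro. apply lam_mul.
Qed.

End Core.

Open Scope positive_scope.

Definition codeI (i : positive * nat) : nat := Cantor.to_nat (Pos.to_nat (fst i), snd i).

Lemma codeI_inj i j : codeI i = codeI j -> i = j.
Proof.
  destruct i as [a n], j as [b m]. unfold codeI. cbn [fst snd]. intro H.
  apply (f_equal Cantor.of_nat) in H. rewrite !Cantor.cancel_of_to in H.
  injection H as H1 H2. apply Pos2Nat.inj in H1. subst. auto.
Qed.

Lemma even_dbl n : Nat.even (n + n) = true.
Proof. rewrite Nat.even_add. destruct (Nat.even n); auto. Qed.
Lemma even_dbl1 n : Nat.even (S (n + n)) = false.
Proof. rewrite Nat.even_succ, <- Nat.negb_even, even_dbl. auto. Qed.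

Lemma dbl_inj n m : (n + n = m + m)%nat -> n = m.
Proof. lia. Qed.

Lemma get_q (x : positive) (T : positive * nat -> bool) :
  infset (fun i => T i = true) -> infset (fun i => T i = false) ->
  exists p pi : positive * nat -> positive * nat, (forall i, p (pi i) = i) /\ (forall i, pi (p i) = i) /\
     (forall i, T (p i) = Sb x i).
Proof.
  intros H1 H2. apply (bij_sets _ codeI codeI_inj); auto.
  - exists (fun n => (1, n)). split; auto. intros n m H. injection H; auto.
  - exists (fun n => (if Pos.eqb x 2 then 3 else 2, n)). split.
    + intro n. unfold Sb. cbn [fst]. destruct (Pos.eqb_spec x 2) as [->|E]; auto.
      simpl. rewrite (proj2 (Pos.eqb_neq 2 x)); auto.
    + intros n m H. injection H; auto.
Qed.

Lemma density_core A (HA : is_group_table A) x y (Hx : x <> 1) S' :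
  In 1 S' -> In x S' -> In y S' ->
  exists B, is_group_table B /\ P_nc B x y /\
  (forall a b, In a S' -> In b S' -> In (A a b) S' -> B a b = A a b).
Proof.
  intros H1 H2 H3.
  destruct (get_q x (fun i => Nat.even (snd i))) as [q1 [q1i [Ha1 [Hb1 Hc1]]]].
  { exists (fun n => (1%positive, (n + n)%nat)). split. intro; apply even_dbl.
    intros n m H. injection H. apply dbl_inj. }
  { exists (fun n => (1%positive, S (n + n))). split. intro; apply even_dbl1.
    intros n m H. injection H. apply dbl_inj. }
  destruct (get_q x (fun i => negb (Nat.even (snd i)))) as [q2 [q2i [Ha2 [Hb2 Hc2]]]].
  { exists (fun n => (1%positive, S (n + n))). split. intro; cbn [snd]; rewrite even_dbl1; auto.
    intros n m H. injection H. apply dbl_inj. }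
  { exists (fun n => (1%positive, (n + n)%nat)). split. intro; cbn [snd]; rewrite even_dbl; auto.
    intros n m H. injection H. apply dbl_inj. }
  exact (core_B A HA x y Hx q1 q1i q2 q2i Ha1 Hb1 Hc1 Ha2 Hb2 Hc2 S' H1 H2 H3).
Qed.

Definition xs (n : nat) : positive := Pos.of_succ_nat (fst (Cantor.of_nat n)).
Definition ys (n : nat) : positive := Pos.of_succ_nat (snd (Cantor.of_nat n)).

Lemma xys_surj x y : exists n, xs n = x /\ ys n = y.
Proof.
  exists (Cantor.to_nat (pred (Pos.to_nat x), pred (Pos.to_nat y))).
  unfold xs, ys. rewrite Cantor.cancel_of_to. cbn [fst snd].
  split; apply SuccNat2Pos.inv; lia.
Qed.

Theorem corollary4p6 :
  comeager_in_G (fun A => is_group_table A /\ simple_table A).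
Proof.
  exists (fun n B => is_group_table B /\ (xs n = 1 \/ P_nc B (xs n) (ys n))). split.
  - intro n. split.
    + intros B [HB HP]. split; auto. destruct HP as [E|[xinv [l [E1 [E2 E3]]]]].
      * exists []. intros B' HB' _. split; auto.
      * exists ((xs n, xinv) :: Fnc B (xs n) xinv l). intros B' HB' Hag. split; auto. right.
        destruct (Fnc_agree B B' (xs n) xinv l) as [F1 F2]; auto.
        { intros p Hp. apply Hag. right; auto. }
        exists xinv, l. split; [|split]; auto.
        -- rewrite <- E1. symmetry. apply (Hag (xs n, xinv)). left; auto.
        -- rewrite F1; auto.
    + intros A F HA. destruct (Pos.eq_dec (xs n) 1) as [E|Hx].
      * exists A. split; auto. split; auto. intros p _. auto.
      * destruct (density_core A HA (xs n) (ys n) Hx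
          (1 :: xs n :: ys n :: flat_map (fun p => [fst p; snd p; A (fst p) (snd p)]) F))
          as [B [HB [HP Hag]]]; simpl; auto.
        exists B. split; auto. split; auto.
        intros p Hp. symmetry. apply Hag; right; right; right; apply in_flat_map; exists p; split; simpl; auto.
  - intros B HB HD. split; auto. split.
    + exists 2. discriminate.
    + intros H HN. destruct (classic (exists x, H x /\ x <> 1)) as [[x [Hx1 Hx2]]|Hno].
      * right. intro y. destruct (xys_surj x y) as [n [E1 E2]].
        destruct (HD n) as [_ [E|P]]. { rewrite E1 in E. contradiction. }
        rewrite E1, E2 in P. apply (P_nc_normal B x y H HN Hx1 P).
      * left. intros x Hx. apply NNPP. intro. apply Hno. eauto.
Qed.
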